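(* Let $i\ge 2$ be an integer and $k=2^i-1$. Let $k^-$ denote the least positive integer congruent to $-k$ modulo $i$. Then $$a_k\le 2^{k+k^-}+2^k-2^{k-i}-1.$$ If moreover $k=2^i-1$ is prime, then equality holds, i.e. $a_k=2^{k+i-1}+2^k-2^{k-i}-1$ (here $k^-=i-1$). Consequently, if there are infinitely many Mersenne primes, then $c_k/2^k\to 1/2$ as $k\to\infty$ through Mersenne primes.
   Context: For a positive integer $k$, $a_k$ is the smallest positive multiple of $k$ whose sum of binary digits equals $k$, and $c_k=a_k/k$. *)

(* Defs.v *)
From Stdlib Require Import Reals ClassicalEpsilon.
From mathcomp Require Import all_boot.

Set Implicit Arguments.
Unset Strict Implicit.
Unset Printing Implicit Defensive.

(* Sum of binary digits of n (fuel n suffices since n./2 < n for n > 0). *)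
Fixpoint bsum_aux (fuel n : nat) : nat :=
  match fuel with
  | 0 => 0
  | S f => if n is 0 then 0 else odd n + bsum_aux f n./2
  end.
Definition bsum (n : nat) : nat := bsum_aux n n.

Definition good (k n : nat) : bool := [&& 0 < n, k %| n & bsum n == k].

(* a_k = smallest positive multiple of k with binary digit sum k
   (defaults to 0 if no such multiple existed; it always exists for k >= 1). *)
Definition a (k : nat) : nat :=
  match excluded_middle_informative (exists n, good k n) with
  | left H => ex_minn H
  | right _ => 0
  end.

Definition c (k : nat) : R := Rdiv (INR (a k)) (INR k).

(* k^- : the least positive integer congruent to -k modulo i (for i > 0). *)
Definition kminus (i k : nat) : nat := i - k %% i.

Definition mersenne_prime (k : nat) : Prop := prime k /\ exists i, k = 2 ^ i - 1.

(* Main.v *)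
Require Import Defs.
From Stdlib Require Import Reals Lra Lia ClassicalEpsilon.
From mathcomp Require Import all_boot.

Ltac nlia :=
  repeat match goal with H : is_true (leq _ _) |- _ => move/leP: H => H end;
  try (apply/leP); simpl nat_of_bool in *;
  repeat match goal with H : context[double _] |- _ => rewrite -mul2n in H end;
  repeat match goal with H : context[addn _ _] |- _ => rewrite -plusE in H end;
  repeat match goal with H : context[subn _ _] |- _ => rewrite -minusE in H end;
  repeat match goal with H : context[muln _ _] |- _ => rewrite -multE in H end;
  rewrite -?mul2n; rewrite -?plusE -?minusE -?multE; lia.

Lemma halfS_le m : (m.+1)./2 <= m.
Proof. by rewrite -divn2 -ltnS ltn_Pdiv. Qed.

Lemma bsum_aux_fuel f1 f2 n : n <= f1 -> n <= f2 -> bsum_aux f1 n = bsum_aux f2 n.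
Proof.
elim: f1 f2 n => [|f1 IH] [|f2] [|n] //= H1 H2.
congr (_ + _); apply: IH.
- exact: leq_trans (halfS_le n) H1.
- exact: leq_trans (halfS_le n) H2.
Qed.

Lemma bsumE n : bsum n = if n is 0 then 0 else odd n + bsum n./2.
Proof.
case: n => // m; rewrite /bsum /=; congr (_ + _); apply: bsum_aux_fuel => //.
exact: halfS_le.
Qed.

Lemma bsum_double n : bsum n.*2 = bsum n.
Proof.
case: n => // n; rewrite bsumE odd_double doubleK. by [].
Qed.

Lemma bsum_doubleS n : bsum n.*2.+1 = (bsum n).+1.
Proof. by rewrite bsumE /= odd_double /= uphalf_double. Qed.

Lemma bsum_db (b : bool) m : bsum (b + m.*2) = b + bsum m.
Proof. by case: b; rewrite ?add1n ?bsum_doubleS ?bsum_double. Qed.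

Lemma bsum_split p x y : y < 2 ^ p -> bsum (2 ^ p * x + y) = bsum x + bsum y.
Proof.
elim: p y => [|p IH] y Hy.
  by move: Hy; rewrite expn0 ltnS leqn0 => /eqP ->; rewrite mul1n !addn0.
have Hy2 : y./2 < 2 ^ p.
  by rewrite -divn2 ltn_divLR // -expnSr.
rewrite -[y]odd_double_half.
have -> : 2 ^ p.+1 * x + (odd y + y./2.*2) = odd y + (2 ^ p * x + y./2).*2.
  by rewrite expnS -!mul2n mulnDr mulnA addnCA.
by rewrite !bsum_db IH // addnCA.
Qed.

Lemma bsum_pow p : bsum (2 ^ p) = 1.
Proof. by rewrite -[2 ^ p]addn0 -{1}[2 ^ p]muln1 bsum_split ?expn_gt0. Qed.

Lemma pow_pred_db p : 2 ^ p.+1 - 1 = true + (2 ^ p - 1).*2.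
Proof.
have H : 0 < 2 ^ p by rewrite expn_gt0.
rewrite expnS; change (nat_of_bool true) with 1; nlia.
Qed.

Lemma bsum_pow1 p : bsum (2 ^ p - 1) = p.
Proof. by elim: p => [|p IH] //; rewrite pow_pred_db bsum_db IH. Qed.

Lemma bsum_le n L : n < 2 ^ L -> bsum n <= L.
Proof.
elim: L n => [|L IH] n Hn.
  by move: Hn; rewrite expn0 ltnS leqn0 => /eqP ->.
rewrite -[n]odd_double_half bsum_db.
have Hn2 : n./2 < 2 ^ L by rewrite -divn2 ltn_divLR // -expnSr.
by case: (odd n) => /=; rewrite ?add0n ?add1n ?ltnS // (leq_trans (IH _ Hn2)).
Qed.

Lemma bsum_compl L n : n < 2 ^ L -> bsum n + bsum (2 ^ L - 1 - n) = L.
Proof.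
elim: L n => [|L IH] n Hn.
  by move: Hn; rewrite expn0 ltnS leqn0 => /eqP ->.
have Hn2 : n./2 < 2 ^ L by rewrite -divn2 ltn_divLR // -expnSr.
have -> : 2 ^ L.+1 - 1 - n = (~~ odd n) + (2 ^ L - 1 - n./2).*2.
  have E := odd_double_half n; rewrite expnS -{1}E.
  move: (odd n) (n./2) Hn2 => [] h Hh /=; nlia.
rewrite -{1}[n]odd_double_half !bsum_db.
case: (odd n) => /=; rewrite ?add0n ?add1n.
- by rewrite addSn IH.
- by rewrite addnS IH.
Qed.

Lemma dbE n : exists (b : bool) h, n = b + h.*2 /\ h <= n.
Proof.
exists (odd n), n./2; split; first by rewrite odd_double_half.
by rewrite -divn2 leq_div.
Qed.

Lemma bsum0_eq n : bsum n = 0 -> n = 0.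
Proof.
elim: n {-2}n (leqnn n) => [|N IH] n Hn; first by move: Hn; rewrite leqn0 => /eqP ->.
have [b [h [E Hh]]] := dbE n; subst n; rewrite bsum_db.
case: b Hn Hh => //= Hn Hh Hb; rewrite (IH h) //.
case: h Hn Hh Hb => //= h Hn Hh Hb.
nlia.
Qed.

Lemma bsum_succ z : bsum z.+1 <= (bsum z).+1.
Proof.
elim: z {-2}z (leqnn z) => [|N IH] z Hz; first by move: Hz; rewrite leqn0 => /eqP ->.
have [b [h [E Hh]]] := dbE z; subst z.
case: b Hh Hz => /= Hh Hz.
- have -> : (1 + h.*2).+1 = false + (h.+1).*2 by rewrite /=; nlia.
  rewrite !bsum_db /= add0n add1n.
  have Hh' : h <= N by nlia.
  apply: leq_trans (IH h Hh') _; by rewrite bsum_doubleS ltnS leqnSn.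
- by rewrite add0n bsum_doubleS bsum_double.
Qed.

Lemma bsum_add x y : bsum (x + y) <= bsum x + bsum y.
Proof.
suff H : forall s x y, x + y <= s -> bsum (x + y) <= bsum x + bsum y by exact: (H (x + y)).
clear x y; elim=> [|N IH] x y Hs.
  by move: Hs; rewrite leqn0 addn_eq0 => /andP [/eqP -> /eqP ->].
case: x Hs => [|x] Hs; first by rewrite add0n.
case: y Hs => [|y] Hs; first by rewrite !addn0.
have [b [h [E _]]] := dbE x.+1; rewrite E in Hs *.
have [c [g [F _]]] := dbE y.+1; rewrite F in Hs *.
rewrite !bsum_db.
case: b c E F Hs => [] [] /= E F Hs.
- have -> : 1 + h.*2 + (1 + g.*2) = false + (h + g).+1.*2 by nlia.
  rewrite bsum_db add0n; apply: leq_trans (bsum_succ _) _.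
  have Hhg : h + g <= N by nlia.
  have HI := IH h g Hhg; nlia.
- have -> : 1 + h.*2 + (0 + g.*2) = true + (h + g).*2 by rewrite /=; nlia.
  rewrite bsum_db; have Hhg : h + g <= N by nlia.
  have HI := IH h g Hhg; nlia.
- have -> : 0 + h.*2 + (1 + g.*2) = true + (h + g).*2 by rewrite /=; nlia.
  rewrite bsum_db; have Hhg : h + g <= N by nlia.
  have HI := IH h g Hhg; nlia.
- have -> : 0 + h.*2 + (0 + g.*2) = false + (h + g).*2 by rewrite /=; nlia.
  rewrite bsum_db; have Hhg : h + g <= N by nlia.
  have HI := IH h g Hhg; nlia.
Qed.

Lemma bsum1 n : bsum n = 1 -> exists p, n = 2 ^ p.
Proof.
elim: n {-2}n (leqnn n) => [|N IH] n Hn; first by move: Hn; rewrite leqn0 => /eqP ->.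
have [b [h [E Hh]]] := dbE n; subst n; rewrite bsum_db.
case: b Hn Hh => /= Hn Hh Hb.
- have : bsum h = 0 by move: Hb; rewrite add1n => -[].
  by move/bsum0_eq => ->; exists 0.
- rewrite add0n in Hb.
  case: h Hn Hh Hb => [|h] Hn Hh Hb; first by [].
  have [|p Hp] := IH h.+1 _ Hb; first by nlia.
  by exists p.+1; rewrite Hp expnS mul2n add0n.
Qed.

Lemma bsum_pos n : 0 < n -> 0 < bsum n.
Proof. by rewrite !lt0n; apply: contra => /eqP /bsum0_eq ->. Qed.

Lemma pow_modk i : 2 ^ i = 1 %[mod 2 ^ i - 1].
Proof.
have H : 0 < 2 ^ i by rewrite expn_gt0.
by rewrite -{1}(subnK H) modnDl.
Qed.

Lemma pow_mod i m : 2 ^ m = 2 ^ (m %% i) %[mod 2 ^ i - 1].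
Proof.
rewrite {1}(divn_eq m i) [_ * i]mulnC expnD expnM -modnMml.
by rewrite -(modnXm _ _ (2 ^ i)) pow_modk modnXm exp1n modnMml mul1n.
Qed.

Lemma fold_lemma i x : 0 < i -> 0 < x ->
  exists t, [/\ 0 < t, t <= 2 ^ i - 1, t = x %[mod 2 ^ i - 1] & bsum t <= bsum x].
Proof.
move=> Hi; elim: x {-2}x (leqnn x) => [|N IH] x Hx Hx0; first by move: Hx Hx0; rewrite leqn0 => /eqP ->.
have HP : 1 < 2 ^ i by rewrite -{1}(expn0 2) ltn_exp2l.
case: (ltnP x (2 ^ i)) => Hlt.
  by exists x; split => //; nlia.
set q := x %/ 2 ^ i; set s := x %% 2 ^ i.
have Ex : x = 2 ^ i * q + s by rewrite /q /s mulnC -divn_eq.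
have Hs : s < 2 ^ i by rewrite ltn_mod expn_gt0.
have Hq : 0 < q by rewrite divn_gt0 ?expn_gt0.
have Hqs : q + s < x.
  by rewrite [X in _ < X]Ex ltn_add2r -{1}[q]mul1n ltn_pmul2r.
have H1 : q + s <= N by nlia.
have H2 : 0 < q + s by nlia.
have [t [Ht0 Htk Htm Htb]] := IH (q + s) H1 H2.
exists t; split => //.
- rewrite Htm Ex; have -> : 2 ^ i * q + s = (2 ^ i - 1) * q + (q + s).
    have Hq2 : q <= 2 ^ i * q by rewrite leq_pmull // expn_gt0.
    rewrite mulnBl mul1n; nlia.
  by rewrite mulnC modnMDl.
- by apply: leq_trans Htb _; rewrite Ex bsum_split // bsum_add.
Qed.

Lemma W1 i x : 0 < i -> 0 < x -> (2 ^ i - 1) %| x -> i <= bsum x.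
Proof.
move=> Hi Hx Hd.
have [t [Ht0 Htk Htm Htb]] := fold_lemma i x Hi Hx.
have Hdt : (2 ^ i - 1) %| t by rewrite /dvdn Htm; exact: Hd.
have Etk : t = 2 ^ i - 1 by apply/eqP; rewrite eqn_leq Htk dvdn_leq.
by rewrite -(bsum_pow1 i) -Etk.
Qed.

Lemma W2 i x r : 0 < i -> 0 < x -> 0 < r < 2 ^ i - 1 -> x = r %[mod 2 ^ i - 1] ->
  bsum r <= bsum x.
Proof.
move=> Hi Hx /andP [Hr0 Hrk] Hm.
have [t [Ht0 Htk Htm Htb]] := fold_lemma i x Hi Hx.
rewrite Hm (modn_small Hrk) in Htm.
move: Htk; rewrite leq_eqVlt => /orP [/eqP Etk | Htk].
  by move: Htm; rewrite Etk modnn => Er; rewrite -Er in Hr0.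
by move: Htm; rewrite (modn_small Htk) => <-.
Qed.

Lemma i_le_k i : i <= 2 ^ i - 1.
Proof. have H : i < 2 ^ i by apply: ltn_expl. nlia. Qed.

Lemma modk_pow i m : (2 ^ m) %% (2 ^ i - 1) = (2 ^ (m %% i)) %% (2 ^ i - 1).
Proof. exact: pow_mod. Qed.

Lemma upper_good i : 2 <= i ->
  good (2 ^ i - 1) (2 ^ ((2 ^ i - 1) + kminus i (2 ^ i - 1)) + 2 ^ (2 ^ i - 1)
       - 2 ^ ((2 ^ i - 1) - i) - 1).
Proof.
move=> Hi.
set k := 2 ^ i - 1; set m := kminus i k.
have Hik : i <= k := i_le_k i.
have Hm : 0 < m by rewrite /m /kminus subn_gt0 ltn_mod; nlia.
have Hp1 : 2 ^ (k - i) < 2 ^ k by rewrite ltn_exp2l //; nlia.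
have Hp2 : 2 ^ k < 2 ^ (k + m) by rewrite ltn_exp2l //; nlia.
have Hp0 : 0 < 2 ^ (k - i) by rewrite expn_gt0.
set T := _ - 1.
have ET : T = 2 ^ (k + m) * 1 + (2 ^ k - 1 - 2 ^ (k - i)) by rewrite /T; nlia.
apply/and3P; split.
- rewrite /T; nlia.
- rewrite /dvdn; apply/eqP.
  have E2 : T + (2 ^ (k - i) + 1) = 2 ^ (k + m) + 2 ^ k by rewrite /T; nlia.
  have Hkm : (k + m) %% i = 0.
    rewrite /m /kminus {1}(divn_eq k i) -addnA subnKC; last by apply: ltnW; rewrite ltn_mod; nlia.
    by rewrite -mulSnr modnMl.
  have A1 : 2 ^ (k + m) %% k = 1 %% k by rewrite /k modk_pow -/k Hkm expn0.
  have A2 : 2 ^ (k - i) %% k = 2 ^ k %% k.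
    rewrite /k modk_pow -/k [in RHS]modk_pow -/k.
    have -> : (k - i) %% i = k %% i by rewrite -{2}(subnK Hik) modnDr.
    by [].
  have E3 : (2 ^ (k + m) + 2 ^ k) %% k = (0 + (2 ^ (k - i) + 1)) %% k.
    by rewrite -modnDm A1 -A2 modnDm add0n addnC.
  by move/eqP: E3; rewrite -E2 eqn_modDr mod0n => /eqP.
- rewrite ET (@bsum_split (k + m) 1 (2 ^ k - 1 - 2 ^ (k - i))).
  - by have := bsum_compl k _ Hp1; rewrite bsum_pow => ->.
  - nlia.
Qed.

Lemma small_pow i a : 2 <= i -> a < i -> 2 ^ a < 2 ^ i - 1.
Proof.
move=> Hi Ha.
have H1 : 2 ^ a <= 2 ^ i.-1 by rewrite leq_exp2l //; nlia.
have H2 : 2 ^ i = 2 * 2 ^ i.-1 by rewrite -expnS prednK //; nlia.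
have H3 : 1 < 2 ^ i.-1 by rewrite -{1}(expn0 2) ltn_exp2l //; nlia.
nlia.
Qed.

Lemma lower i n : 2 <= i -> (2 ^ i - 1) %% i = 1 -> good (2 ^ i - 1) n ->
  2 ^ ((2 ^ i - 1) + i - 1) + 2 ^ (2 ^ i - 1) - 2 ^ ((2 ^ i - 1) - i) - 1 <= n.
Proof.
move=> Hi Hki /and3P [Hn0 Hd /eqP Hb].
set k := 2 ^ i - 1 in Hki Hd Hb *.
have Hik : i <= k := i_le_k i.
have Hk3 : 3 <= k.
  have H := small_pow i 1 Hi Hi; rewrite expn1 in H; rewrite /k; nlia.
set L := (trunc_log 2 n).+1.
have HnL : n < 2 ^ L := trunc_log_ltn n (isT : 1 < 2).
have HnL' : 2 ^ L.-1 <= n := trunc_logP (isT : 1 < 2) Hn0.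
have HkL : k <= L by rewrite -Hb; apply: bsum_le.
have Hki1 : 2 ^ (k - i) < 2 ^ k by rewrite ltn_exp2l //; nlia.
have Hki2 : 2 ^ k <= 2 ^ (k + i - 1) by rewrite leq_exp2l //; nlia.
have Hki3 : 2 ^ (k + i) = 2 * 2 ^ (k + i - 1) by rewrite -expnS; congr (2 ^ _); nlia.
case: (ltnP (k + i) L) => HL.
  have H : 2 ^ (k + i) <= 2 ^ L.-1 by rewrite leq_exp2l //; nlia.
  nlia.
have HZb : bsum (2 ^ L - 1 - n) = L - k by have H := bsum_compl L n HnL; rewrite Hb in H; nlia.
have HZm : (2 ^ L - 1 - n + 1) %% k = 2 ^ ((L - k + 1) %% i) %% k.
  have E : (2 ^ L - 1 - n + 1) + n = 2 ^ L.
    have H : 0 < 2 ^ L by rewrite expn_gt0.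
    nlia.
  have E2 : ((2 ^ L - 1 - n + 1) + n) %% k = (2 ^ L - 1 - n + 1) %% k.
    by move: Hd => /dvdnP [q ->]; rewrite addnC modnMDl.
  rewrite -E2 E /k modk_pow -/k.
  congr (2 ^ _ %% k).
  have EL : L = (L - k) + k by nlia.
  by rewrite {1}EL -modnDmr Hki.
set Z := 2 ^ L - 1 - n in HZb HZm.
set j := L - k in HZb HZm.
have Hk0 : 0 < i by nlia.
case: (ltnP j.+1 i) => Hj1.
  exfalso.
  rewrite [j + 1]addn1 (modn_small Hj1) in HZm.
  have Hs := small_pow i j.+1 Hi Hj1.
  have Hp2 : 2 <= 2 ^ j.+1 by rewrite expnS; (have H : 0 < 2 ^ j by rewrite expn_gt0); nlia.
  case: (posnP Z) => HZ0.
    move: HZm; rewrite HZ0 add0n (modn_small Hs) modn_small; nlia.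
  have HZm' : Z = 2 ^ j.+1 - 1 %[mod k].
    apply/eqP; rewrite -(eqn_modDr 1) subnK; last nlia.
    by apply/eqP.
  have HW := W2 i Z (2 ^ j.+1 - 1) Hk0 HZ0.
  rewrite bsum_pow1 HZb in HW.
  have : j.+1 <= j by apply: HW => //; apply/andP; split; nlia.
  by rewrite ltnn.
case: (ltnP j i) => Hj2.
  exfalso.
  have Eji : j.+1 = i by nlia.
  rewrite [j + 1]addn1 Eji modnn expn0 in HZm.
  have HZ0 : 0 < Z.
    rewrite lt0n; apply/negP => /eqP HZ0; move: HZb; rewrite HZ0 bsumE => H; nlia.
  have HdZ : k %| Z.
    rewrite /dvdn; apply/eqP; rewrite -(mod0n k); apply/eqP; rewrite -(eqn_modDr 1).
    by apply/eqP.
  have HW := W1 i Z Hk0 HZ0 HdZ.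
  nlia.
have Hj3 : i <= L - k := Hj2.
have EL : L = k + i by nlia.
case: (leqP (2 ^ (k + i - 1) + 2 ^ k - 2 ^ (k - i) - 1) n) => // HnT.
exfalso.
have Hlow : 2 ^ (k + i - 1) <= n by rewrite (_ : k + i - 1 = L.-1) //; nlia.
set m := n - 2 ^ (k + i - 1).
have En : n = 2 ^ (k + i - 1) * 1 + m by rewrite /m; nlia.
have Hm : m < 2 ^ k - 2 ^ (k - i) - 1 by rewrite /m; nlia.
have Hmk : m < 2 ^ k by nlia.
have Hmk' : m < 2 ^ (k + i - 1) by nlia.
have Hmb : bsum m = k - 1.
  move: Hb; rewrite En (bsum_split (k + i - 1) 1 m Hmk') => H; rewrite -H (_ : bsum 1 = 1) //; nlia.
have Hc := bsum_compl k m Hmk.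
have [p Hp] : exists p, 2 ^ k - 1 - m = 2 ^ p by apply: bsum1; nlia.
have Hp1 : k - i < p by rewrite -(ltn_exp2l _ _ (isT : 1 < 2)) -Hp; nlia.
have Hp2 : p < k by rewrite -(ltn_exp2l _ _ (isT : 1 < 2)) -Hp; nlia.
have E : n + 2 ^ p + 1 = 2 ^ (k + i - 1) + 2 ^ k.
  have H : 0 < 2 ^ (k - i) by rewrite expn_gt0.
  rewrite -Hp; nlia.
have M1 : 2 ^ (k + i - 1) %% k = 1 %% k.
  rewrite /k modk_pow -/k.
  have -> : (k + i - 1) %% i = 0.
    rewrite -addnBA; last nlia.
    by rewrite -modnDml Hki (_ : 1 + (i - 1) = i) ?modnn //; nlia.
  by [].
have M2 : 2 ^ k %% k = 2 %% k by rewrite /k modk_pow -/k Hki.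
have M3 : (2 ^ p + 1) %% k = (2 + 1) %% k.
  have E2 : (n + 2 ^ p + 1) %% k = (2 ^ p + 1) %% k.
    by move: Hd => /dvdnP [q ->]; rewrite -addnA modnMDl.
  by rewrite -E2 E -modnDm M1 M2 modnDm addnC.
have M4 : 2 ^ (p %% i) = 2 ^ 1.
  move/eqP: M3; rewrite eqn_modDr => /eqP.
  rewrite /k modk_pow -/k.
  have Hs := small_pow i (p %% i) Hi (ltn_pmod p Hk0).
  by rewrite (modn_small Hs) (modn_small Hk3).
move/eqP: M4; rewrite eqn_exp2l // => /eqP M4.
have Hdv : i %| k - p by rewrite -eqn_mod_dvd; [rewrite Hki M4 | nlia].
have Hkp : 0 < k - p by nlia.
have HH := dvdn_leq Hkp Hdv; nlia.
Qed.

Lemma a_spec k n : good k n -> good k (a k) /\ a k <= n.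
Proof.
move=> Hn; rewrite /a.
case: (excluded_middle_informative (exists n, good k n)) => [H | H]; last by exfalso; apply: H; exists n.
case: ex_minnP => m Hm Hmin; split => //; exact: Hmin.
Qed.

Lemma mersenne_exp_prime i : 2 <= i -> prime (2 ^ i - 1) -> prime i.
Proof.
move=> Hi Hk; apply/primeP; split => // d Hdi.
have Hi0 : 0 < i by nlia.
have Hdv : (2 ^ d - 1) %| (2 ^ i - 1).
  have H1 : 1 <= 2 ^ i by rewrite expn_gt0.
  rewrite -eqn_mod_dvd //.
  move: Hdi => /dvdnP [q ->].
  by rewrite mulnC expnM -modnXm pow_modk modnXm exp1n.
move/primeP: Hk => [_ Hk]; have := Hk _ Hdv; rewrite /= => /orP [/eqP H | /eqP H].
- have : 2 ^ d = 2 ^ 1 by rewrite expn1; nlia.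
  by move/eqP; rewrite eqn_exp2l // => ->.
- have : 2 ^ d = 2 ^ i.
    have H2 : 0 < 2 ^ d by rewrite expn_gt0.
    have H3 : 0 < 2 ^ i by rewrite expn_gt0.
    nlia.
  by move/eqP; rewrite eqn_exp2l // => /eqP ->; rewrite eqxx orbT.
Qed.

Lemma mersenne_mod i : 2 <= i -> prime (2 ^ i - 1) -> (2 ^ i - 1) %% i = 1.
Proof.
move=> Hi Hk.
have Hp := mersenne_exp_prime i Hi Hk.
have F := fermat_little 2 Hp.
have H1 : 1 <= 2 ^ i by rewrite expn_gt0.
have : (2 ^ i - 1) + 1 = 1 + 1 %[mod i] by rewrite subnK.
by move/eqP; rewrite eqn_modDr (modn_small Hi) => /eqP.
Qed.

Lemma INR_pow2 k : INR (2 ^ k) = pow (IZR 2%Z) k.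
Proof.
elim: k => [|k IH] //; rewrite expnS -multE mult_INR IH /=; lra.
Qed.

Lemma INR_muln m n : INR (m * n) = Rmult (INR m) (INR n).
Proof. exact: mult_INR. Qed.
Lemma INR_addn m n : INR (m + n) = Rplus (INR m) (INR n).
Proof. exact: plus_INR. Qed.

Local Open Scope R_scope.

Lemma real_bound (k T A : nat) : (0 < k)%N -> (2 * T = k * 2 ^ k + A)%N -> (A < 3 * 2 ^ k)%N ->
  Rlt (Rabs (Rminus (Rdiv (Rdiv (INR T) (INR k)) (pow (IZR 2%Z) k)) (Rdiv R1 (IZR 2%Z)))) (3 / INR k).
Proof.
move=> Hk E HA.
have E' : 2 * INR T = INR k * pow 2 k + INR A.
  have H := f_equal INR E; rewrite !INR_muln INR_addn INR_muln INR_pow2 /= in H; lra.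
have HA' : INR A < 3 * pow 2 k.
  move/ltP: HA => HA; apply lt_INR in HA; rewrite INR_muln INR_pow2 /= in HA; lra.
have HK : 0 < INR k by apply: lt_0_INR; apply/ltP.
have HP : 0 < pow 2 k by apply: pow_lt; lra.
have HA0 : 0 <= INR A by apply: pos_INR.
have Ex : INR T / INR k / pow 2 k - 1 / 2 = INR A / (2 * INR k * pow 2 k).
  have -> : INR T = (INR k * pow 2 k + INR A) / 2 by lra.
  field; split; lra.
rewrite Ex Rabs_right; last first.
  apply: Rle_ge; rewrite /Rdiv; apply: Rmult_le_pos => //; left; apply: Rinv_0_lt_compat; nra.
have -> : 3 / INR k = (6 * pow 2 k) / (2 * INR k * pow 2 k) by field; lra.
apply: Rmult_lt_compat_r; last lra.
apply: Rinv_0_lt_compat; nra.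
Qed.

Local Close Scope R_scope.

Lemma eq_part i : 2 <= i -> prime (2 ^ i - 1) ->
     kminus i (2 ^ i - 1) = i - 1 /\
     a (2 ^ i - 1) =
       2 ^ ((2 ^ i - 1) + i - 1) + 2 ^ (2 ^ i - 1)
       - 2 ^ ((2 ^ i - 1) - i) - 1.
Proof.
move=> Hi Hp.
have Hm := mersenne_mod i Hi Hp.
have Hkm : kminus i (2 ^ i - 1) = i - 1 by rewrite /kminus Hm.
split => //.
have Hg := upper_good i Hi.
rewrite Hkm addnBA in Hg; last by nlia.
have [Ha1 Ha2] := a_spec _ _ Hg.
apply/eqP; rewrite eqn_leq Ha2 /=.
exact: lower i _ Hi Hm Ha1.
Qed.

Lemma nat_part i : 2 <= i -> let k := 2 ^ i - 1 in
  let T := 2 ^ (k + i - 1) + 2 ^ k - 2 ^ (k - i) - 1 in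
  2 * T = k * 2 ^ k + (3 * 2 ^ k - 2 * 2 ^ (k - i) - 2) /\
  3 * 2 ^ k - 2 * 2 ^ (k - i) - 2 < 3 * 2 ^ k.
Proof.
move=> Hi k T.
have Hik : i <= k := i_le_k i.
have Hki1 : 2 ^ (k - i) < 2 ^ k by rewrite ltn_exp2l //; nlia.
have H0 : 0 < 2 ^ (k - i) by rewrite expn_gt0.
have E1 : 2 * 2 ^ (k + i - 1) = k * 2 ^ k + 2 ^ k.
  rewrite -expnS (_ : (k + i - 1).+1 = k + i); last by nlia.
  have H : 0 < 2 ^ i by rewrite expn_gt0.
  have H2 : 2 ^ i = k + 1 by rewrite /k; nlia.
  by rewrite expnD H2 mulnDr muln1 mulnC.
have Hki2 : 2 ^ k <= 2 ^ (k + i - 1) by rewrite leq_exp2l //; nlia.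
split; rewrite /T; nlia.
Qed.

Lemma lim_part (eps : R) : Rlt R0 eps ->
   exists N : nat, forall k : nat, mersenne_prime k -> N <= k ->
     Rlt (Rabs (Rminus (Rdiv (c k) (pow (IZR 2%Z) k)) (Rdiv R1 (IZR 2%Z)))) eps.
Proof.
move=> He.
have [N HN] := INR_archimed eps (IZR 3) He.
exists N => k [Hp [i Hk]] HNk; subst k.
have Hi : 2 <= i.
  case: i Hp HNk => [|[|i]] //.
have Hk0 : 0 < 2 ^ i - 1 by rewrite prime_gt0.
rewrite /c; have [_ E] := eq_part i Hi Hp; rewrite E.
have [E1 E2] := nat_part i Hi.
apply: Rlt_le_trans (real_bound _ _ _ Hk0 E1 E2) _.
have HK : Rlt R0 (INR (2 ^ i - 1)) by apply: lt_0_INR; apply/ltP.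
have HNK : Rle (INR N) (INR (2 ^ i - 1)) by apply: le_INR; apply/leP.
apply: (Rmult_le_reg_r (INR (2 ^ i - 1))) => //.
rewrite /Rdiv Rmult_assoc Rinv_l; last lra.
nra.
Qed.


Theorem mainTheorem7 :
  (forall i : nat, 2 <= i ->
     a (2 ^ i - 1) <=
       2 ^ ((2 ^ i - 1) + kminus i (2 ^ i - 1)) + 2 ^ (2 ^ i - 1)
       - 2 ^ ((2 ^ i - 1) - i) - 1) /\
  (forall i : nat, 2 <= i -> prime (2 ^ i - 1) ->
     kminus i (2 ^ i - 1) = i - 1 /\
     a (2 ^ i - 1) =
       2 ^ ((2 ^ i - 1) + i - 1) + 2 ^ (2 ^ i - 1)
       - 2 ^ ((2 ^ i - 1) - i) - 1) /\
  ((forall N : nat, exists k : nat, N <= k /\ mersenne_prime k) ->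
   forall eps : R, Rlt R0 eps ->
   exists N : nat, forall k : nat, mersenne_prime k -> N <= k ->
     Rlt (Rabs (Rminus (Rdiv (c k) (pow (IZR 2%Z) k)) (Rdiv R1 (IZR 2%Z)))) eps).
Proof.
split; [|split].
- move=> i Hi; exact: (a_spec _ _ (upper_good i Hi)).2.
- exact: eq_part.
- move=> _; exact: lim_part.
Qed.
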